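(* Let $\eta\in(0,1)$ be such that for every real sequence $\{\gamma_n\}_{n\in\mathbb{Z}}$ with $|\gamma_n-n|<\eta$ for all $n$, the system $E(\{\gamma_n\})$ is a Riesz basis of $L^2[0,1]$. Then there exists $\Lambda\subseteq\mathbb{Z}$ such that $E(\Lambda)$ is a Riesz basis of $L^2[0,\eta]$.
   Context: For real $\lambda$, $e_\lambda(t)=e^{2\pi i\lambda t}$, and $E(\Lambda)=\{e_\lambda\}_{\lambda\in\Lambda}$. A Riesz basis of a Hilbert space is the image of an orthonormal basis under a bounded invertible operator. *)

(* Defs.v *)
From HB Require Import structures.
From mathcomp Require Import all_boot all_order all_algebra.
From mathcomp Require Import all_classical all_reals all_analysis.
From mathcomp Require Import complex.
Set Implicit Arguments. Unset Strict Implicit. Unset Printing Implicit Defensive.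
Import Order.TTheory GRing.Theory Num.Theory.
Import numFieldNormedType.Exports.
Local Open Scope classical_set_scope.
Local Open Scope ring_scope.
Local Open Scope complex_scope.

Section L2.
Variable R : realType.
Local Notation C := R[i].
Local Notation leb := (@lebesgue_measure R).

Definition itv0 (a : R) : set R := `[0, a]%classic.

Definition csq (z : C) : R := (complex.Re z) ^+ 2 + (complex.Im z) ^+ 2.

(* f (a representative of an element of) L^2[0,a], complex valued *)
Definition L2 (a : R) (f : R -> C) : Prop :=
  [/\ measurable_fun (itv0 a) (fun x => complex.Re (f x)),
      measurable_fun (itv0 a) (fun x => complex.Im (f x)) &
      (\int[leb]_(x in (itv0 a)) (csq (f x))%:E < +oo)%E].

Definition normL2 (a : R) (f : R -> C) : R :=
  Num.sqrt (Rintegral leb (itv0 a) (fun x => csq (f x))).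

(* equality in L^2[0,a] (i.e. a.e. equality on [0,a]) *)
Definition eqL2 (a : R) (f g : R -> C) : Prop :=
  normL2 a (fun x => f x - g x) = 0.

Definition innerL2 (a : R) (f g : R -> C) : C :=
  (Rintegral leb (itv0 a) (fun x => complex.Re (f x * conjc (g x))))
  +i* (Rintegral leb (itv0 a) (fun x => complex.Im (f x * conjc (g x)))).

Definition orthonormal_basis (a : R) (I : Type) (u : I -> R -> C) : Prop :=
  [/\ forall i, L2 a (u i),
      forall i j, innerL2 a (u i) (u j) = if `[< i = j >] then 1 else 0 &
      forall f, L2 a f -> (forall i, innerL2 a f (u i) = 0) -> eqL2 a f (fun=> 0)].

Definition bounded_linear_op (a : R) (T : (R -> C) -> (R -> C)) : Prop :=
  [/\ forall f, L2 a f -> L2 a (T f),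
      forall (c : C) f g, L2 a f -> L2 a g ->
        eqL2 a (T (fun x => c * f x + g x)) (fun x => c * T f x + T g x) &
      exists K : R, forall f, L2 a f -> normL2 a (T f) <= K * normL2 a f].

Definition bounded_invertible_op (a : R) (T : (R -> C) -> (R -> C)) : Prop :=
  bounded_linear_op a T /\
  exists S, [/\ bounded_linear_op a S,
     forall f, L2 a f -> eqL2 a (S (T f)) f &
     forall f, L2 a f -> eqL2 a (T (S f)) f].

Definition riesz_basis (a : R) (I : Type) (v : I -> R -> C) : Prop :=
  exists (u : I -> R -> C) (T : (R -> C) -> (R -> C)),
    [/\ orthonormal_basis a u, bounded_invertible_op a T &
        forall i, eqL2 a (T (u i)) (v i)].

(* e_lambda(t) = exp(2 pi i lambda t) *)
Definition expo (lam : R) : R -> C :=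
  fun t => (cos (2 * pi * lam * t)) +i* (sin (2 * pi * lam * t)).

End L2.

(* Main.v *)
From HB Require Import structures.
From mathcomp Require Import all_boot all_order all_algebra.
From mathcomp Require Import all_classical all_reals all_analysis.
From mathcomp Require Import complex ring lra measurable_realfun.
Require Import Defs.
Import Order.TTheory GRing.Theory Num.Theory.
Import numFieldNormedType.Exports.
Local Open Scope classical_set_scope.
Local Open Scope ring_scope.
Local Open Scope complex_scope.
Section S.
Variable R : realType.
Local Notation mu := (@lebesgue_measure R).
Local Notation C := R[i].
Lemma ReM (k z : C) : complex.Re (k * z) = complex.Re k * complex.Re z - complex.Im k * complex.Im z.
Proof. by case: k => k1 k2; case: z => z1 z2. Qed.
Lemma ImM (k z : C) : complex.Im (k * z) = complex.Re k * complex.Im z + complex.Im k * complex.Re z.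
Proof. by case: k => k1 k2; case: z => z1 z2 /=. Qed.
Lemma ReD (k z : C) : complex.Re (k + z) = complex.Re k + complex.Re z.
Proof. by case: k => k1 k2; case: z => z1 z2. Qed.
Lemma ImD (k z : C) : complex.Im (k + z) = complex.Im k + complex.Im z.
Proof. by case: k => k1 k2; case: z => z1 z2. Qed.
Lemma ReB (k z : C) : complex.Re (k - z) = complex.Re k - complex.Re z.
Proof. by case: k => k1 k2; case: z => z1 z2. Qed.
Lemma ImB (k z : C) : complex.Im (k - z) = complex.Im k - complex.Im z.
Proof. by case: k => k1 k2; case: z => z1 z2. Qed.
Lemma Reconj (z : C) : complex.Re (conjc z) = complex.Re z.
Proof. by case: z. Qed.


Lemma meas_scale (c : R) (A : set R) : 0 < c -> measurable A ->
  mu A = (c%:E * mu ((fun x => c * x)%R @^-1` A))%E.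
Proof.
move=> c0 mA.
have mpsi : measurable_fun setT ((fun x : R => c * x) : R -> measurableTypeR R).
  exact: mulrl_measurable.
apply: (@lebesgue_measure_unique R (mscale (NngNum (ltW c0)) (pushforward mu ((fun x : R => c * x) : R -> measurableTypeR R)))) => //.
move=> X /ocitvP [->|[[x1 x2]/= x12 ->]].
  by rewrite !measure0.
transitivity (c%:E * mu ((fun x => c * x)%R @^-1` `]x1, x2]%classic))%E; last by [].
have -> : (fun x => c * x)%R @^-1` `]x1, x2]%classic = `]x1 / c, x2 / c]%classic.
  apply/seteqP; split => x /=; rewrite !in_itv /=.
    by rewrite ltr_pdivrMr // ler_pdivlMr // ![_ * c]mulrC.
  by rewrite ltr_pdivrMr // ler_pdivlMr // ![_ * c]mulrC.
rewrite !lebesgue_measure_itv /= !lte_fin x12 ltr_pM2r ?invr_gt0 // x12.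
by rewrite -!EFinD -EFinM; congr (_%:E); field; rewrite gt_eqF.
Qed.

Lemma int_scale_ge0 (a c : R) (f : R -> \bar R) : 0 < c ->
  measurable_fun (itv0 a) f -> (forall x : R, (0 <= f x)%E) ->
  (\int[mu]_(x in itv0 (c * a)%R) f (x / c)%R = c%:E * \int[mu]_(x in itv0 a) f x)%E.
Proof.
move=> c0 mf f0.
have mpsi : measurable_fun setT ((fun x : R => c * x) : R -> measurableTypeR R).
  exact: mulrl_measurable.
have mD : measurable (itv0 (c * a)) by exact: measurable_itv.
have mg : measurable_fun (itv0 (c * a)) (fun x => f (x / c)).
  apply: (measurable_comp (F := itv0 a)) => //.
  - exact: measurable_itv.
  - move=> _ [x /= + <-]; rewrite /itv0 /= !in_itv /= => /andP[x0 xa].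
    by rewrite divr_ge0 ?(ltW c0) //= ler_pdivrMr // mulrC.
  - exact: (@mulrr_measurable R _ c^-1).
rewrite (eq_measure_integral (mscale (NngNum (ltW c0)) (pushforward mu ((fun x : R => c * x) : R -> measurableTypeR R)))); last first.
  by move=> A mA _; exact: meas_scale.
rewrite ge0_integral_mscale //=; try by move=> x _; exact: f0.
rewrite ge0_integral_pushforward //; try by move=> x _; exact: f0.
congr (_ * _)%E.
have -> : (fun x => c * x)%R @^-1` itv0 (c * a) = itv0 a.
  apply/seteqP; split => x /=; rewrite /itv0 /= !in_itv /=.
    by rewrite pmulr_rge0 // ler_pM2l.
  by move=> /andP[x0 xa]; rewrite mulr_ge0 ?(ltW c0) // ler_pM2l // xa.
apply: eq_integral => x _ /=; by rewrite mulrC mulKf // gt_eqF.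
Qed.

Lemma fine_scaleB (c : R) (A B : \bar R) : 0 <= c -> (0 <= A)%E -> (0 <= B)%E ->
  fine (c%:E * A - c%:E * B)%E = c * fine (A - B)%E.
Proof.
rewrite le_eqVlt => /orP[/eqP<-|c0]; first by rewrite !mul0e sube0 mul0r.
move: A B => [x| |] [y| |] //= _ _.
- by rewrite mulrBr.
- by rewrite mulry gtr0_sg // mul1e /= mulr0.
- by rewrite mulry gtr0_sg // mul1e /= mulr0.
- by rewrite mulry gtr0_sg // mul1e /= mulr0.
Qed.

Lemma Rint_scale (a c : R) (h : R -> R) : 0 < c -> measurable_fun (itv0 a) h ->
  Rintegral mu (itv0 (c * a)) (fun x => h (x / c)) = c * Rintegral mu (itv0 a) h.
Proof.
move=> c0 mh; rewrite /Rintegral.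
rewrite integralE [in RHS]integralE.
have -> : (fun x => (h (x / c))%:E) = (EFin \o h) \o (fun x => x / c) by [].
rewrite funepos_comp funeneg_comp.
have mEh : measurable_fun (itv0 a) (EFin \o h) by exact/measurable_EFinP.
rewrite (@int_scale_ge0 a c ((EFin \o h)^\+)%E) //; try exact: measurable_funepos;
  try by move=> x; exact: funepos_ge0.
rewrite (@int_scale_ge0 a c ((EFin \o h)^\-)%E) //; try exact: measurable_funeneg;
  try by move=> x; exact: funeneg_ge0.
rewrite fine_scaleB ?(ltW c0) //; apply: integral_ge0 => x _; [exact: funepos_ge0|exact: funeneg_ge0].
Qed.

Lemma RintZ (D : set R) (r : R) (h : R -> R) : measurable D -> 0 <= r ->
  measurable_fun D h -> Rintegral mu D (fun x => r * h x) = r * Rintegral mu D h.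
Proof.
move=> mD r0 mh; rewrite /Rintegral.
under eq_integral do rewrite EFinM.
rewrite integralE [in RHS]integralE ge0_funeposM // ge0_funenegM //.
have mEh : measurable_fun D (EFin \o h) by exact/measurable_EFinP.
rewrite ge0_integralZl //; try exact: measurable_funepos;
  try by move=> x _; exact: funepos_ge0.
rewrite ge0_integralZl //; try exact: measurable_funeneg;
  try by move=> x _; exact: funeneg_ge0.
rewrite fine_scaleB //; apply: integral_ge0 => x _; [exact: funepos_ge0|exact: funeneg_ge0].
Qed.

Lemma meas_comp_scale (a c : R) (g : R -> R) : 0 < c ->
  measurable_fun (itv0 a) g -> measurable_fun (itv0 (c * a)) (fun x => g (x / c)).
Proof.
move=> c0 mg.
apply: (measurable_comp (F := itv0 a)) => //.
- exact: measurable_itv.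
- move=> _ [x /= + <-]; rewrite /itv0 /= !in_itv /= => /andP[x0 xa].
  by rewrite divr_ge0 ?(ltW c0) //= ler_pdivrMr // mulrC.
- exact: (@mulrr_measurable R _ c^-1).
Qed.

Definition Scl (k : C) (c : R) (f : R -> C) : R -> C := fun s => k * f (s / c).
Definition meas2 (a : R) (f : R -> C) :=
  measurable_fun (itv0 a) (fun x => complex.Re (f x)) /\
  measurable_fun (itv0 a) (fun x => complex.Im (f x)).

Lemma meas2_Scl a b c k f : 0 < c -> b = c * a -> meas2 a f -> meas2 b (Scl k c f).
Proof.
move=> c0 -> [mr mi]; rewrite /Scl; split.
  under eq_fun do rewrite ReM.
  apply: measurable_funB; apply: measurable_funM => //;
    exact: (@meas_comp_scale a c (fun y => _ (f y))).
under eq_fun do rewrite ImM.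
apply: measurable_funD; apply: measurable_funM => //;
  exact: (@meas_comp_scale a c (fun y => _ (f y))).
Qed.

Lemma meas2_L2 a f : L2 a f -> meas2 a f.
Proof. by case. Qed.

Lemma meas2_lin a k f g : meas2 a f -> meas2 a g -> meas2 a (fun x => k * f x + g x).
Proof.
move=> [mr mi] [mr' mi']; split.
  under eq_fun do rewrite ReD ReM.
  by apply: measurable_funD => //; apply: measurable_funB; apply: measurable_funM.
under eq_fun do rewrite ImD ImM.
by apply: measurable_funD => //; apply: measurable_funD; apply: measurable_funM.
Qed.

Lemma meas2_sub a f g : meas2 a f -> meas2 a g -> meas2 a (fun x => f x - g x).
Proof.
move=> [mr mi] [mr' mi']; split.
  by under eq_fun do rewrite ReB; apply: measurable_funB.
by under eq_fun do rewrite ImB; apply: measurable_funB.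
Qed.

Lemma meas2_0 a : meas2 a (fun _ => 0).
Proof. by split; exact: measurable_cst. Qed.

Lemma meas_csq a f : meas2 a f -> measurable_fun (itv0 a) (fun x => csq (f x)).
Proof.
move=> [mr mi]; rewrite /csq.
by apply: measurable_funD; apply: measurable_funX.
Qed.

Lemma csqM (k z : C) : csq (k * z) = csq k * csq z.
Proof. by case: k => k1 k2; case: z => z1 z2; rewrite /csq /=; ring. Qed.

Lemma csq_ge0 (z : C) : 0 <= csq z.
Proof. by rewrite /csq addr_ge0 // sqr_ge0. Qed.

Lemma norm_Scl a b c k f : 0 < c -> b = c * a -> meas2 a f ->
  normL2 b (Scl k c f) = Num.sqrt (csq k * c) * normL2 a f.
Proof.
move=> c0 -> mf; rewrite /normL2 /Scl.
under eq_Rintegral do rewrite csqM.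
rewrite RintZ ?csq_ge0 //; try exact: measurable_itv;
  try exact: (@meas_comp_scale a c (fun y => csq (f y)) c0 (@meas_csq a f mf)).
rewrite (@Rint_scale a c (fun y => csq (f y))) //; last exact: meas_csq.
by rewrite mulrA sqrtrM // mulr_ge0 ?csq_ge0 ?(ltW c0).
Qed.

Lemma eqL2_Scl a b c k f g : 0 < c -> b = c * a -> meas2 a f -> meas2 a g ->
  eqL2 a f g -> eqL2 b (Scl k c f) (Scl k c g).
Proof.
move=> c0 bE mf mg; rewrite /eqL2 => H.
have -> : (fun x => Scl k c f x - Scl k c g x) = Scl k c (fun x => f x - g x).
  by apply: funext => x; rewrite /Scl mulrBr.
by rewrite (@norm_Scl a) // ?H ?mulr0 //; exact: meas2_sub.
Qed.

Lemma L2_Scl a b c k f : 0 < c -> b = c * a -> L2 a f -> L2 b (Scl k c f).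
Proof.
move=> c0 bE Lf; have [mr mi] := @meas2_Scl a b c k f c0 bE (@meas2_L2 a f Lf).
split => //; subst b.
case: Lf => mfr mfi fin.
rewrite /Scl.
under eq_integral do rewrite csqM EFinM.
rewrite ge0_integralZl //; last 3 first.
- apply/measurable_EFinP.
  exact: (@meas_comp_scale a c (fun y => csq (f y)) c0 (@meas_csq a f (conj mfr mfi))).
- by move=> x _; rewrite lee_fin csq_ge0.
- by rewrite lee_fin csq_ge0.
rewrite (@int_scale_ge0 a c (fun y => (csq (f y))%:E)) //; last 2 first.
- apply/measurable_EFinP; exact: (@meas_csq a f (conj mfr mfi)).
- by move=> x; rewrite lee_fin csq_ge0.
rewrite muleA -EFinM; apply: lte_mul_pinfty => //.
by rewrite lee_fin mulr_ge0 ?csq_ge0 ?(ltW c0).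
exact: measurable_itv.
Qed.

Lemma Re_kk (k z w : C) : complex.Re (k * z * conjc (k * w)) = csq k * complex.Re (z * conjc w).
Proof. by case: k => k1 k2; case: z => z1 z2; case: w => w1 w2; rewrite /csq /=; ring. Qed.

Lemma Im_kk (k z w : C) : complex.Im (k * z * conjc (k * w)) = csq k * complex.Im (z * conjc w).
Proof. by case: k => k1 k2; case: z => z1 z2; case: w => w1 w2; rewrite /csq /=; ring. Qed.

Lemma Imconj (z : C) : complex.Im (conjc z) = - complex.Im z.
Proof. by case: z. Qed.

Lemma meas_Reprod a f g : meas2 a f -> meas2 a g ->
  measurable_fun (itv0 a) (fun x => complex.Re (f x * conjc (g x))).
Proof.
move=> [mr mi] [mr' mi'].
under eq_fun do rewrite ReM Reconj Imconj.
by apply: measurable_funB; apply: measurable_funM => //; apply: measurable_funN.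
Qed.

Lemma meas_Improd a f g : meas2 a f -> meas2 a g ->
  measurable_fun (itv0 a) (fun x => complex.Im (f x * conjc (g x))).
Proof.
move=> [mr mi] [mr' mi'].
under eq_fun do rewrite ImM Reconj Imconj.
by apply: measurable_funD; apply: measurable_funM => //; apply: measurable_funN.
Qed.

Lemma inner_Scl a b c k f g : 0 < c -> b = c * a -> meas2 a f -> meas2 a g ->
  innerL2 b (Scl k c f) (Scl k c g) =
  (csq k * c * Rintegral mu (itv0 a) (fun x => complex.Re (f x * conjc (g x))))
  +i* (csq k * c * Rintegral mu (itv0 a) (fun x => complex.Im (f x * conjc (g x)))).
Proof.
move=> c0 -> mf mg; rewrite /innerL2 /Scl.
under eq_Rintegral do rewrite Re_kk.
under [X in _ +i* X]eq_Rintegral do rewrite Im_kk.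
rewrite !RintZ ?csq_ge0 //; try exact: measurable_itv.
- rewrite (@Rint_scale a c (fun y => complex.Re (f y * conjc (g y)))) //;
    last exact: meas_Reprod.
  rewrite (@Rint_scale a c (fun y => complex.Im (f y * conjc (g y)))) //;
    last exact: meas_Improd.
  by rewrite !mulrA.
- have := @meas_comp_scale a c (fun y => complex.Im (f y * conjc (g y))) c0 (@meas_Improd a f g mf mg).
  exact.
- have := @meas_comp_scale a c (fun y => complex.Re (f y * conjc (g y))) c0 (@meas_Reprod a f g mf mg).
  exact.
Qed.

Lemma Scl_comp k k' c c' f : c != 0 -> c' != 0 ->
  Scl k c (Scl k' c' f) = Scl (k * k') (c' * c) f.
Proof.
move=> c0 c'0; apply: funext => x; rewrite /Scl mulrA.
by rewrite -[x / c / c']mulrA -invfM [c * c']mulrC.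
Qed.

Lemma Scl_1 f : Scl 1 1 f = f.
Proof. by apply: funext => x; rewrite /Scl mul1r invr1 mulr1. Qed.

Lemma csq_add (u w : C) : csq (u + w) <= 2 * csq u + 2 * csq w.
Proof.
case: u => u1 u2; case: w => w1 w2; rewrite /csq /=.
have := sqr_ge0 (u1 - w1); have := sqr_ge0 (u2 - w2); rewrite !expr2; nra.
Qed.

Lemma L2_lin (a : R) (k : C) (f g : R -> C) : L2 a f -> L2 a g -> L2 a (fun x => k * f x + g x).
Proof.
move=> Lf Lg.
have [mr mi] := @meas2_lin a k f g (@meas2_L2 a f Lf) (@meas2_L2 a g Lg).
split => //.
case: Lf => mfr mfi finf; case: Lg => mgr mgi fing.
have mcf := @meas_csq a f (conj mfr mfi).
have mcg := @meas_csq a g (conj mgr mgi).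
have mD : measurable (itv0 a) by exact: measurable_itv.
apply: (@le_lt_trans _ _ (\int[mu]_(x in itv0 a) ((2 * csq k)%:E * (csq (f x))%:E + 2%:E * (csq (g x))%:E))%E).
  apply: ge0_le_integral => //.
  - by move=> x _; rewrite lee_fin csq_ge0.
  - by apply/measurable_EFinP; exact: (@meas_csq a _ (conj mr mi)).
  - by apply: emeasurable_funD; apply/measurable_funeM/measurable_EFinP.
  - move=> x _; rewrite -!EFinM -EFinD lee_fin.
    by rewrite (le_trans (csq_add _ _)) // csqM mulrA.
rewrite ge0_integralD //; try (by move=> x _; rewrite mule_ge0 // lee_fin ?mulr_ge0 ?csq_ge0);
  try (by apply/measurable_funeM/measurable_EFinP).
rewrite !ge0_integralZl //; try (by apply/measurable_EFinP);
  try (by move=> x _; rewrite lee_fin csq_ge0).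
apply: lte_add_pinfty; apply: lte_mul_pinfty => //;
  by rewrite lee_fin ?mulr_ge0 ?csq_ge0.
all: by rewrite lee_fin ?mulr_ge0 ?csq_ge0.
Qed.

Lemma blo_conj (a b c1 c2 : R) (k1 k2 : C) T : 0 < c1 -> 0 < c2 -> b = c1 * a -> a = c2 * b ->
  bounded_linear_op a T -> bounded_linear_op b (fun f => Scl k1 c1 (T (Scl k2 c2 f))).
Proof.
move=> c1p c2p bE aE [HL Hlin [K HK]].
have LS2 f : L2 b f -> L2 a (Scl k2 c2 f) by move=> Lf; exact: (@L2_Scl b a c2 k2 f).
split.
- move=> f Lf; apply: (@L2_Scl a b c1 k1) => //; exact/HL/LS2.
- move=> z f g Lf Lg.
  have -> : Scl k2 c2 (fun x => z * f x + g x) = (fun x => z * Scl k2 c2 f x + Scl k2 c2 g x).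
    by apply: funext => x; rewrite /Scl; ring.
  have -> : (fun x => z * Scl k1 c1 (T (Scl k2 c2 f)) x + Scl k1 c1 (T (Scl k2 c2 g)) x)
      = Scl k1 c1 (fun x => z * T (Scl k2 c2 f) x + T (Scl k2 c2 g) x).
    by apply: funext => x; rewrite /Scl; ring.
  apply: (@eqL2_Scl a b c1) => //.
  + apply/meas2_L2/HL/L2_lin; exact: LS2.
  + by apply/meas2_L2/L2_lin; apply/HL/LS2.
  + apply: Hlin; exact: LS2.
- exists (Num.sqrt (csq k1 * c1) * K * Num.sqrt (csq k2 * c2)) => f Lf.
  rewrite (@norm_Scl a b c1) //; last by apply/meas2_L2/HL/LS2.
  rewrite -!mulrA ler_wpM2l ?sqrtr_ge0 //.
  rewrite (le_trans (HK _ (LS2 _ Lf))) //.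
  by rewrite (@norm_Scl b a c2) // ?mulrA //; exact: meas2_L2.
Qed.

Definition mfl (e : R) (n : int) : int := Num.floor (n%:~R / e).

Lemma mfl_bound (e : R) (n : int) : 0 < e ->
  `|e * (mfl e n)%:~R - n%:~R| < e.
Proof.
move=> e0; rewrite /mfl.
have /andP[h1 h2] := floor_itv (n%:~R / e).
set F := Num.floor _ in h1 h2 *.
rewrite intrD in h2.
have i1 : (1%:~R : R) = 1 by [].
rewrite i1 in h2.
have a1 : e * F%:~R <= n%:~R.
  by rewrite mulrC -ler_pdivlMr.
have a2 : n%:~R < e * F%:~R + e.
  by move: h2; rewrite ltr_pdivrMr // mulrDl mul1r mulrC.
rewrite ler0_norm ?subr_le0 // opprB.
by rewrite ltrBlDr addrC.
Qed.

Lemma mfl_mono (e : R) (n n' : int) : 0 < e -> e < 1 -> (n < n')%R -> (mfl e n < mfl e n')%R.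
Proof.
move=> e0 e1 nn'; rewrite /mfl -(ltr_int R).
have /andP[h1 _] := floor_itv (n%:~R / e).
have /andP[_ h2] := floor_itv (n'%:~R / e).
rewrite intrD in h2.
apply: (le_lt_trans h1).
have i1 : (1%:~R : R) = 1 by [].
have nn1 : (n + 1)%:~R <= n'%:~R :> R by rewrite ler_int lezD1.
rewrite intrD i1 in nn1; rewrite i1 in h2.
have : n%:~R / e + 1 < n'%:~R / e.
  have : n%:~R / e + 1 < (n%:~R + 1) / e.
    rewrite mulrDl ltrD2l ltr_pdivlMr // mul1r //.
  move=> /lt_le_trans; apply.
  by rewrite ler_pM2r ?invr_gt0.
move=> h3; rewrite -(ltrD2r 1); exact: (lt_trans h3 h2).
Qed.

Lemma mfl_inj (e : R) : 0 < e -> e < 1 -> injective (mfl e).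
Proof.
move=> e0 e1 n n' H.
case: (ltgtP n n') => // hn.
  by move: (@mfl_mono e _ _ e0 e1 hn); rewrite H ltxx.
by move: (@mfl_mono e _ _ e0 e1 hn); rewrite H ltxx.
Qed.

Lemma meas2_expo (a l : R) : meas2 a (expo l).
Proof.
split; apply: measurable_funTS; apply: continuous_measurable_fun => x /=.
- apply: (@continuous_comp _ _ _ ( *%R (2 * pi * l)) cos); [exact: mulrl_continuous|exact: continuous_cos].
- apply: (@continuous_comp _ _ _ ( *%R (2 * pi * l)) sin); [exact: mulrl_continuous|exact: continuous_sin].
Qed.

Lemma main_aux (eta : R) :
  0 < eta < 1 ->
  (forall gamma : int -> R,
     (forall n : int, `|gamma n - n%:~R| < eta) ->
     riesz_basis 1 (fun n : int => expo (gamma n))) ->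
  exists Lam : set int,
    riesz_basis eta (fun l : {z : int | Lam z} => expo ((sval l)%:~R : R)).
Proof.
move=> /andP[e0 e1] H.
set m := mfl eta.
have [u [T [[uL uo uc] [hT [S [hS ST TS]]] Hv]]] :=
  H (fun n => eta * (m n)%:~R) (fun n => @mfl_bound eta n e0).
pose Lam : set int := fun z => exists n, m n = z.
exists Lam.
pose idx (l : {z : int | Lam z}) : int := proj1_sig (cid (proj2_sig l)).
have m_idx l : m (idx l) = sval l by rewrite /idx; case: cid.
have minj : injective m := @mfl_inj eta e0 e1.
have idx_m n (p : Lam (m n)) : idx (exist _ (m n) p) = n by apply: minj; rewrite m_idx.
have en0 : eta != 0 by rewrite gt_eqF.
pose c0 : R := (Num.sqrt eta)^-1.
pose kC : C := c0 +i* 0.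
have kC0 : kC != 0.
  apply/negP => /eqP[]; rewrite /c0; apply/eqP.
  by rewrite invr_eq0 sqrtr_eq0 -ltNge.
have ck : csq kC * eta = 1.
  rewrite /csq /= /c0 expr0n /= addr0 exprVn sqr_sqrtr ?(ltW e0) //.
  by rewrite mulVf.
pose E := Scl kC eta. pose Einv := Scl kC^-1 eta^-1.
pose E0 := Scl 1 eta. pose E0inv := Scl 1 eta^-1.
have EEinv f : E (Einv f) = f.
  by rewrite /E /Einv Scl_comp ?invr_eq0 // mulfV // mulVf // Scl_1.
have EinvE f : Einv (E f) = f.
  by rewrite /E /Einv Scl_comp ?invr_eq0 // mulVf // mulfV // Scl_1.
have E0E0inv f : E0 (E0inv f) = f.
  by rewrite /E0 /E0inv Scl_comp ?invr_eq0 // mulr1 mulVf // Scl_1.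
have E0invE0 f : E0inv (E0 f) = f.
  by rewrite /E0 /E0inv Scl_comp ?invr_eq0 // mulr1 mulfV // Scl_1.
have b1 : eta = eta * 1 by rewrite mulr1.
have b2 : 1 = eta^-1 * eta by rewrite mulVf.
have ep : 0 < eta^-1 by rewrite invr_gt0.
have [TL _ _] := hT. have [SL _ _] := hS.
exists (fun l => E (u (idx l))), (fun f => E0 (T (Einv f))).
split.
- split.
  + move=> l; exact: (@L2_Scl 1 eta eta kC _ e0 b1 (uL _)).
  + move=> l l'.
    rewrite /E (@inner_Scl 1 eta eta kC _ _ e0 b1 (@meas2_L2 _ _ (uL _)) (@meas2_L2 _ _ (uL _))) ck !mul1r.
    have := uo (idx l) (idx l'); rewrite /innerL2 => ->.
    have eqv : (idx l = idx l') = (l = l').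
      apply: propext; split => [h|->//].
      have : sval l = sval l' by rewrite -!m_idx h.
      case: l l' {h} => [z p] [z' p'] /= zz; subst z'.
      by congr exist; exact: Prop_irrelevance.
    by rewrite eqv.
  + move=> f Lf Hf.
    have Lg : L2 1 (Einv f) := @L2_Scl eta 1 eta^-1 kC^-1 f ep b2 Lf.
    have Hg n : innerL2 1 (Einv f) (u n) = 0.
      have := Hf (exist _ (m n) (ex_intro _ n erefl)); rewrite idx_m -{1}(EEinv f).
      rewrite /E (@inner_Scl 1 eta eta kC _ _ e0 b1 (@meas2_L2 _ _ Lg) (@meas2_L2 _ _ (uL n))) ck !mul1r.
      by [].
    have h0 := uc _ Lg Hg.
    have := @eqL2_Scl 1 eta eta kC (Einv f) (fun=> 0) e0 b1 (@meas2_L2 _ _ Lg) (meas2_0 1) h0.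
    rewrite -/(E (Einv f)) EEinv.
    have -> : Scl kC eta (fun _ => 0) = fun _ => 0 by apply: funext => x; rewrite /Scl mulr0.
    by [].
- split.
  + exact: (@blo_conj 1 eta eta eta^-1 1 kC^-1 T e0 ep b1 b2 hT).
  + exists (fun f => E (S (E0inv f))); split.
    * exact: (@blo_conj 1 eta eta eta^-1 kC 1 S e0 ep b1 b2 hS).
    * move=> f Lf /=; rewrite E0invE0 -{2}(EEinv f).
      have Lg : L2 1 (Einv f) := @L2_Scl eta 1 eta^-1 kC^-1 f ep b2 Lf.
      apply: (@eqL2_Scl 1 eta eta kC) => //.
      - exact/meas2_L2/SL/TL.
      - exact: meas2_L2.
      - exact: ST.
    * move=> f Lf /=; rewrite EinvE -{2}(E0E0inv f).
      have Lg : L2 1 (E0inv f) := @L2_Scl eta 1 eta^-1 1 f ep b2 Lf.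
      apply: (@eqL2_Scl 1 eta eta 1) => //.
      - exact/meas2_L2/TL/SL.
      - exact: meas2_L2.
      - exact: TS.
- move=> l /=; rewrite EinvE.
  have h := Hv (idx l).
  have := @eqL2_Scl 1 eta eta 1 _ _ e0 b1 (@meas2_L2 _ _ (TL _ (uL _))) (meas2_expo 1 _) h.
  have -> : Scl 1 eta (expo (eta * (m (idx l))%:~R)) = expo (sval l)%:~R.
    apply: funext => x; rewrite /Scl /expo mul1r m_idx.
    by congr (_ +i* _); [congr cos|congr sin]; field.
  by [].
Qed.
End S.
Local Close Scope complex_scope.

Theorem mainTheorem3 (R : realType) (eta : R) :
  0 < eta < 1 ->
  (forall gamma : int -> R,
     (forall n : int, `|gamma n - n%:~R| < eta) ->
     riesz_basis 1 (fun n : int => expo (gamma n))) ->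
  exists Lam : set int,
    riesz_basis eta (fun l : {z : int | Lam z} => expo ((sval l)%:~R : R)).
Proof. exact: (@main_aux R eta). Qed.
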